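(* Let $h>0$ and $1>\theta_1>\theta_2>0$, and let $\Theta\in\mathbb{R}^{2\times2}$ be given by \[ \Theta=\frac{1}{4h}\begin{pmatrix}\cot(\pi\theta_1)&\cot\left(\pi\frac{\theta_1+\theta_2}{2}\right)-\cot\left(\pi\frac{\theta_1-\theta_2}{2}\right)\\ \cot\left(\pi\frac{\theta_1+\theta_2}{2}\right)-\cot\left(\pi\frac{\theta_2-\theta_1}{2}\right)&\cot(\pi\theta_2)\end{pmatrix}. \] (i) If $\theta_1\le1/2$, then $\Theta$ is invertible for all $\theta_2\in(0,\theta_1)$. (ii) If $\theta_1>1/2$, then $\Theta$ is invertible for all $\theta_2\in(0,\theta_1)$ except for exactly one value $\hat\theta_2(\theta_1)$, which lies in $(0,1/2)$. The graph of $\hat\theta_2:(1/2,1)\to(0,1/2)$ is the image of the curve \[ (\pi/4,3\pi/4)\to(1/2,1)\times(0,1/2),\qquad t\mapsto\bigl((t+f(t))/\pi,\,(t-f(t))/\pi\bigr), \] where $f(x)=\operatorname{arccot}\left(\sqrt{\tfrac12\left(\cot(x)^2+\sqrt{4-3\cot(x)^4}\right)}\right)$ for $x\in(\pi/4,3\pi/4)$. *)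

(* Defs.v *)
From Stdlib Require Import Reals.
From mathcomp Require Import all_boot all_algebra.
From mathcomp Require Import Rstruct.

Set Implicit Arguments.
Unset Strict Implicit.
Unset Printing Implicit Defensive.

Open Scope R_scope.

Definition cot (x : R) : R := cos x / sin x.

(* principal arccotangent, with values in (0, PI) *)
Definition arccot (y : R) : R := PI / 2 - atan y.

Definition Theta_entry (t1 t2 : R) (i j : nat) : R :=
  match i, j with
  | 0%nat, 0%nat => cot (PI * t1)
  | 0%nat, _ => cot (PI * ((t1 + t2) / 2)) - cot (PI * ((t1 - t2) / 2))
  | _, 0%nat => cot (PI * ((t1 + t2) / 2)) - cot (PI * ((t2 - t1) / 2))
  | _, _ => cot (PI * t2)
  end.

Definition Theta (h t1 t2 : R) : 'M[R]_2 :=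
  \matrix_(i < 2, j < 2) (/ (4 * h) * Theta_entry t1 t2 i j).

Definition f_curve (x : R) : R :=
  arccot (sqrt (/ 2 * (cot x ^ 2 + sqrt (4 - 3 * cot x ^ 4)))).

(* Main.v *)
Require Import Defs.
From Stdlib Require Import Reals Lra ClassicalEpsilon.
From mathcomp Require Import all_boot all_algebra.
From mathcomp Require Import Rstruct.
Import GRing.Theory.
Open Scope R_scope.
Section S.
Local Open Scope ring_scope.
Lemma det22 (A : 'M[R]_2) : \det A = A 0 0 * A 1 1 - A 0 1 * A 1 0.
Proof.
rewrite (expand_det_row _ 0) !big_ord_recl big_ord0 /cofactor !det_mx11 /=.
rewrite !mxE /=.
have E1 : lift (0 : 'I_2) (0 : 'I_1) = 1 by apply/val_inj.
have E3 : lift (ord0 : 'I_2) (ord0 : 'I_1) = 1 by apply/val_inj.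
have E5 : lift (1 : 'I_2) (0 : 'I_1) = 0 by apply/val_inj.
rewrite ?E1 ?E3 E5 /= expr0 expr1 addr0 mul1r mulN1r mulrN. done.
Qed.
End S.
Definition Dt (t1 t2 : R) : R :=
  cot (PI * t1) * cot (PI * t2) -
  (cot (PI * ((t1 + t2) / 2)) - cot (PI * ((t1 - t2) / 2))) *
  (cot (PI * ((t1 + t2) / 2)) - cot (PI * ((t2 - t1) / 2))).
Lemma aux_k (k A B C E : R) : k*A*(k*B) - k*C*(k*E) = k*k*(A*B - C*E).
Proof. ring. Qed.
Lemma unit_Theta h t1 t2 : 0 < h -> (Theta h t1 t2 \in unitmx <-> Dt t1 t2 <> 0).
Proof.
intro hp.
rewrite unitmxE unitfE det22 !mxE /=.
rewrite -!RmultE -!RminusE.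
have E : forall z : R, (z != 0%R) <-> z <> 0 by move=> z; split => [/eqP|/eqP].
rewrite E aux_k -/(Dt t1 t2).
assert (/(4*h) <> 0) by (apply Rinv_neq_0_compat; lra).
split; intros H1 H2; apply H1.
- rewrite H2; ring.
- destruct (Rmult_integral _ _ H2) as [H3|H3]; [|exact H3].
  destruct (Rmult_integral _ _ H3); contradiction.
Qed.

Definition G (x y : R) : R := x*y*(x-y)^2 + 4*(1-x^2)*(1-y^2).

Lemma one_m_cos2 a : 1 - cos a ^ 2 = sin a ^ 2.
Proof. pose proof (sin2_cos2 a) as H. unfold Rsqr in H. nra. Qed.

Lemma id_D u v : sin u <> 0 -> sin v <> 0 -> sin (u+v) <> 0 -> sin (u-v) <> 0 ->
  4 * (cot (u+v) * cot (u-v) - (cot u - cot v) * (cot u - cot (-v))) *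
  (sin (u+v) * sin (u-v) * sin u ^ 2 * sin v ^ 2) = G (cos (u+v)) (cos (u-v)).
Proof.
intros H1 H2 H3 H4. unfold G. rewrite !one_m_cos2. unfold cot.
rewrite sin_neg cos_neg. rewrite sin_plus sin_minus cos_plus cos_minus in H3 H4 *.
field. repeat split; auto.
Qed.

Lemma id_G u v : sin u <> 0 -> sin v <> 0 ->
  G (cos (u+v)) (cos (u-v)) = 4 * sin u ^ 4 * sin v ^ 4 *
   ((cot v ^ 2) ^ 2 - cot u ^ 2 * cot v ^ 2 + (cot u ^ 2) ^ 2 - 1).
Proof.
intros H1 H2. unfold G. rewrite !one_m_cos2. unfold cot.
rewrite sin_plus sin_minus cos_plus cos_minus.
field. auto.
Qed.

Lemma id_S u v : sin u <> 0 -> sin v <> 0 ->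
  sin (u+v) * sin (u-v) = sin u ^ 2 * sin v ^ 2 * (cot v ^ 2 - cot u ^ 2).
Proof.
intros H1 H2. unfold cot. rewrite sin_plus sin_minus. field. auto.
Qed.

Lemma id_C u v : sin u <> 0 -> sin v <> 0 ->
  cos (u+v) = sin u * sin v * (cot u * cot v - 1).
Proof.
intros H1 H2. unfold cot. rewrite cos_plus. field. auto.
Qed.

Lemma PIpos : 0 < PI. Proof. exact PI_RGT_0. Qed.

Lemma Dt_uv t1 t2 :
  let u := PI * ((t1 + t2) / 2) in let v := PI * ((t1 - t2) / 2) in
  Dt t1 t2 = cot (u+v) * cot (u-v) - (cot u - cot v) * (cot u - cot (-v)).
Proof.
intros u v. unfold Dt.
replace (PI * t1) with (u+v) by (unfold u, v; field).
replace (PI * t2) with (u-v) by (unfold u, v; field).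
replace (PI * ((t2 - t1) / 2)) with (-v) by (unfold v; field).
reflexivity.
Qed.

Lemma Dt_zero_iff t1 t2 : 0 < t2 -> t2 < t1 -> t1 < 1 ->
  (Dt t1 t2 = 0 <-> G (cos (PI * t1)) (cos (PI * t2)) = 0).
Proof.
intros h1 h2 h3. pose proof PIpos as HPI.
set (u := PI * ((t1 + t2) / 2)). set (v := PI * ((t1 - t2) / 2)).
replace (PI * t1) with (u+v) by (unfold u, v; field).
replace (PI * t2) with (u-v) by (unfold u, v; field).
rewrite Dt_uv. fold u v.
assert (su : 0 < sin u) by (apply sin_gt_0; unfold u; nra).
assert (sv : 0 < sin v) by (apply sin_gt_0; unfold v; nra).
assert (sa : 0 < sin (u+v)) by (apply sin_gt_0; unfold u, v; nra).
assert (sb : 0 < sin (u-v)) by (apply sin_gt_0; unfold u, v; nra).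
rewrite <- id_D by lra.
assert (W : 0 < sin (u+v) * sin (u-v) * sin u ^ 2 * sin v ^ 2).
{ apply Rmult_lt_0_compat; [apply Rmult_lt_0_compat;[apply Rmult_lt_0_compat|]|]; auto;
  apply pow_lt; auto. }
split; intro H.
- rewrite H. ring.
- destruct (Rmult_integral _ _ H) as [H'|H']; [|lra].
  lra.
Qed.

Lemma cos2_lt (u : R) : 0 < u < PI -> (cos u ^ 2 < sin u ^ 2 <-> PI/4 < u < 3*PI/4).
Proof.
intros [h1 h2]. pose proof PIpos as HPI.
pose proof (cos_2a u) as C.
split; intro H.
- assert (cos (2*u) < 0) by nra.
  destruct (Rle_lt_dec u (PI/4)).
  + assert (0 <= cos (2*u)) by (apply cos_ge_0; lra). lra.
  + destruct (Rle_lt_dec (3*PI/4) u).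
    * assert (0 <= cos (2*u)) by (apply cos_ge_0_3PI2; lra). lra.
    * lra.
- assert (cos (2*u) < 0) by (apply cos_lt_0; lra). nra.
Qed.

Lemma cot2_lt (u : R) : 0 < u < PI -> (cot u ^ 2 < 1 <-> PI/4 < u < 3*PI/4).
Proof.
intros hu. rewrite <- cos2_lt by auto.
assert (0 < sin u) by (apply sin_gt_0; lra).
unfold cot.
replace ((cos u / sin u) ^ 2) with (cos u ^ 2 / sin u ^ 2) by (field; lra).
assert (0 < sin u ^ 2) by nra.
split; intro H1.
- apply (Rmult_lt_compat_r (sin u ^ 2)) in H1; auto.
  replace (cos u ^ 2 / sin u ^ 2 * sin u ^ 2) with (cos u ^ 2) in H1 by (field; lra). lra.
- apply (Rmult_lt_reg_r (sin u ^ 2)); auto.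
  replace (cos u ^ 2 / sin u ^ 2 * sin u ^ 2) with (cos u ^ 2) by (field; lra). lra.
Qed.

Lemma cot_shift w : cot (PI/2 - w) = tan w.
Proof. unfold cot, tan. rewrite cos_shift sin_shift. reflexivity. Qed.

Lemma arccot_cot v : 0 < v < PI/2 -> arccot (cot v) = v.
Proof.
intro hv. unfold arccot.
replace v with (PI/2 - (PI/2 - v)) at 1 by ring.
rewrite cot_shift atan_tan. ring. lra.
Qed.

Lemma arccot_pos y : 0 < y -> 0 < arccot y < PI/2 /\ cot (arccot y) = y.
Proof.
intro hy. unfold arccot.
pose proof (atan_bound y). pose proof (atan_increasing 0 y hy). rewrite atan_0 in H0.
split. lra.
replace (PI/2 - atan y) with (PI/2 - atan y) by ring.
rewrite cot_shift tan_atan. reflexivity.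
Qed.

Lemma sin_pos_PI t : 0 < t < 1 -> 0 < sin (PI * t).
Proof. intro. pose proof PIpos as HPI. apply sin_gt_0; nra. Qed.

Lemma one_m_pos t : 0 < t < 1 -> 0 < 1 - cos (PI * t) ^ 2.
Proof. intro. rewrite one_m_cos2. pose proof (sin_pos_PI t H). nra. Qed.

Lemma cos_neg_t t : 1/2 < t < 1 -> cos (PI * t) < 0.
Proof. intro. pose proof PIpos as HPI. apply cos_lt_0; nra. Qed.

Definition Pr (t1 t2 : R) : Prop := 0 < t2 < t1 /\ G (cos (PI * t1)) (cos (PI * t2)) = 0.

Lemma root_small t1 t2 : 1/2 < t1 < 1 -> Pr t1 t2 -> t2 < 1/2.
Proof.
intros h [[a b] c]. pose proof PIpos as HPI.
destruct (Rlt_le_dec t2 (1/2)) as [|l]; auto. exfalso.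
assert (cos (PI * t2) <= 0) by (apply cos_le_0; nra).
pose proof (cos_neg_t t1 h).
pose proof (one_m_pos t1 ltac:(lra)). pose proof (one_m_pos t2 ltac:(lra)).
unfold G in c.
set (x := cos (PI * t1)) in *. set (y := cos (PI * t2)) in *.
assert (0 <= x*y*(x-y)^2) by (apply Rmult_le_pos; nra).
assert (0 < (1-x^2)*(1-y^2)) by nra. lra.
Qed.

Lemma root_unique t1 t2 t3 : 1/2 < t1 < 1 -> Pr t1 t2 -> Pr t1 t3 -> t2 = t3.
Proof.
intros h P2 P3. pose proof PIpos as HPI.
pose proof (root_small _ _ h P2). pose proof (root_small _ _ h P3).
destruct P2 as [[a2 b2] c2]. destruct P3 as [[a3 b3] c3].
assert (y2p : 0 < cos (PI * t2)) by (apply cos_gt_0; nra).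
assert (y3p : 0 < cos (PI * t3)) by (apply cos_gt_0; nra).
pose proof (cos_neg_t t1 h).
pose proof (one_m_pos t1 ltac:(lra)).
apply (Rmult_eq_reg_l PI); [|lra].
apply cos_inj; try nra.
unfold G in c2, c3.
set (x := cos (PI * t1)) in *. set (y := cos (PI * t2)) in *. set (z := cos (PI * t3)) in *.
set (Q := x*(y^2+y*z+z^2) - 2*x^2*(y+z) + x^3 - 4*(1-x^2)*(y+z)).
assert (E : (y - z) * Q = 0) by (unfold Q; nra).
assert (Q < 0).
{ unfold Q. assert (x*(y^2+y*z+z^2) < 0) by (apply Rmult_neg_pos; nra).
  assert (0 <= x^2*(y+z)) by (apply Rmult_le_pos; nra).
  assert (x^3 < 0) by (replace (x^3) with (x * x^2) by ring; apply Rmult_neg_pos; nra).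
  assert (0 < (1-x^2)*(y+z)) by (apply Rmult_lt_0_compat; nra).
  lra. }
destruct (Rmult_integral _ _ E); lra.
Qed.

Lemma G_cont x : continuity (fun s => G x (cos (PI * s))).
Proof. unfold G. apply derivable_continuous. reg. Qed.

Lemma root_exists t1 : 1/2 < t1 < 1 -> exists t2, Pr t1 t2.
Proof.
intro h. pose proof PIpos as HPI.
pose proof (cos_neg_t t1 h).
pose proof (one_m_pos t1 ltac:(lra)).
set (x := cos (PI * t1)) in *.
destruct (IVT (fun s => G x (cos (PI * s))) 0 (1/2)) as [z [[z1 z2] hz]].
- apply G_cont.
- lra.
- rewrite Rmult_0_r cos_0. unfold G. assert (0 < (x-1)^2) by nra. nra.
- replace (PI * (1/2)) with (PI/2) by field. rewrite cos_PI2. unfold G. nra.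
- exists z. assert (Gz : G x (cos (PI * z)) = 0) by lra.
  split; [|exact Gz].
  destruct (Req_dec z 0) as [e|e].
  { rewrite e Rmult_0_r cos_0 in Gz. unfold G in Gz. nra. }
  destruct (Req_dec z (1/2)) as [e'|e'].
  { rewrite e' in Gz. replace (PI * (1/2)) with (PI/2) in Gz by field. rewrite cos_PI2 in Gz.
    unfold G in Gz. nra. }
  lra.
Qed.

Definition hat (t1 : R) : R := epsilon (inhabits 0) (Pr t1).

Lemma hat_spec t1 : 1/2 < t1 < 1 -> Pr t1 (hat t1).
Proof. intro h. unfold hat. apply epsilon_spec. apply root_exists; auto. Qed.

Lemma curve_fwd x : 1/2 < x < 1 -> exists t : R, PI/4 < t < 3 * PI / 4 /\
           x = (t + f_curve t) / PI /\ hat x = (t - f_curve t) / PI.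
Proof.
intro hx. pose proof PIpos as HPI.
pose proof (hat_spec x hx) as Ph. pose proof (root_small _ _ hx Ph) as hs.
destruct Ph as [[b1 b2] Gz].
set (y := hat x) in *.
set (u := PI * ((x + y) / 2)). set (v := PI * ((x - y) / 2)).
assert (su : 0 < sin u) by (apply sin_gt_0; unfold u; nra).
assert (sv : 0 < sin v) by (apply sin_gt_0; unfold v; nra).
assert (Ea : PI * x = u + v) by (unfold u, v; field).
assert (Eb : PI * y = u - v) by (unfold u, v; field).
assert (sa : 0 < sin (u+v)) by (rewrite <- Ea; apply sin_pos_PI; lra).
assert (sb : 0 < sin (u-v)) by (rewrite <- Eb; apply sin_pos_PI; lra).
rewrite Ea Eb id_G in Gz; try lra.
pose proof (id_S u v ltac:(lra) ltac:(lra)) as S.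
set (X := cot u ^ 2) in *. set (Y := cot v ^ 2) in *.
assert (Q : Y^2 - X*Y + X^2 - 1 = 0).
{ assert (0 < 4 * sin u ^ 4 * sin v ^ 4).
  { apply Rmult_lt_0_compat; [apply Rmult_lt_0_compat|]; try lra; apply pow_lt; lra. }
  destruct (Rmult_integral _ _ Gz); [lra|]. lra. }
assert (YX : X < Y).
{ assert (0 < sin u ^ 2 * sin v ^ 2) by (apply Rmult_lt_0_compat; apply pow_lt; lra).
  nra. }
assert (X0 : 0 <= X) by (unfold X; nra).
assert (X1 : X < 1) by nra.
assert (cvp : 0 < cot v).
{ unfold cot; apply Rdiv_lt_0_compat; [apply cos_gt_0|exact sv]; unfold v; nra. }
assert (fv : f_curve u = v).
{ unfold f_curve. fold X.
  replace (cot u ^ 4) with (X^2) by (unfold X; ring).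
  replace (4 - 3 * X^2) with ((2*Y - X)^2) by nra.
  rewrite sqrt_pow2; [|nra].
  replace (/ 2 * (X + (2 * Y - X))) with (cot v ^ 2) by (unfold Y; field).
  rewrite sqrt_pow2; [|lra].
  apply arccot_cot. unfold v; nra. }
exists u. split; [|split].
- apply cot2_lt; [unfold u; nra| exact X1].
- rewrite fv -Ea. field. lra.
- rewrite fv -Eb. field. lra.
Qed.

Lemma curve_bwd t : PI/4 < t < 3 * PI / 4 ->
  1/2 < (t + f_curve t) / PI < 1 /\ (t - f_curve t) / PI = hat ((t + f_curve t) / PI).
Proof.
intro ht. pose proof PIpos as HPI.
assert (su : 0 < sin t) by (apply sin_gt_0; lra).
pose proof (proj2 (cot2_lt t ltac:(lra)) ht) as X1.
set (X := cot t ^ 2) in *.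
assert (X0 : 0 <= X) by (unfold X; nra).
set (S := sqrt (4 - 3 * X^2)).
assert (S2 : S * S = 4 - 3*X^2) by (apply sqrt_sqrt; nra).
assert (S0 : 0 <= S) by (apply sqrt_pos).
assert (SX : X < S) by nra.
set (Y := / 2 * (X + S)).
assert (Q : Y^2 - X*Y + X^2 - 1 = 0) by (unfold Y; nra).
assert (YX : X < Y) by (unfold Y; lra).
assert (Efv : f_curve t = arccot (sqrt Y)).
{ unfold f_curve, Y, S, X. f_equal. f_equal. f_equal. f_equal. f_equal. f_equal. ring. }
assert (sYp : 0 < sqrt Y) by (apply sqrt_lt_R0; lra).
destruct (arccot_pos _ sYp) as [vb cv].
rewrite <- Efv in vb, cv.
set (v := f_curve t) in *.
assert (sv : 0 < sin v) by (apply sin_gt_0; lra).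
assert (cv2 : cot v ^ 2 = Y) by (rewrite cv; simpl; rewrite Rmult_1_r; apply sqrt_sqrt; lra).
pose proof (id_S t v ltac:(lra) ltac:(lra)) as Sp. fold X in Sp. rewrite cv2 in Sp.
assert (Spos : 0 < sin (t+v) * sin (t-v)).
{ rewrite Sp. apply Rmult_lt_0_compat; [apply Rmult_lt_0_compat; apply pow_lt; lra|lra]. }
assert (h1 : 0 < t - v).
{ destruct (Rlt_le_dec 0 (t-v)) as [|l]; auto. exfalso.
  assert (sin (t - v) <= 0).
  { replace (t - v) with (- (v - t)) by ring. rewrite sin_neg.
    assert (0 <= sin (v - t)) by (apply sin_ge_0; lra). lra. }
  assert (0 < sin (t+v)) by (apply sin_gt_0; lra). nra. }
assert (h2 : t + v < PI).
{ destruct (Rlt_le_dec (t+v) PI) as [|l]; auto. exfalso.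
  assert (sin (t + v) <= 0) by (apply sin_le_0; lra).
  assert (0 < sin (t-v)) by (apply sin_gt_0; lra). nra. }
assert (XY1 : X * Y < 1) by nra.
assert (cc : cot t * cot v < 1).
{ assert ((cot t * cot v)^2 < 1) by (replace ((cot t * cot v)^2) with (X * Y) by (unfold X; rewrite <- cv2; ring); lra).
  nra. }
assert (cneg : cos (t+v) < 0).
{ rewrite id_C; try lra. assert (0 < sin t * sin v) by nra. nra. }
assert (h3 : PI/2 < t + v).
{ destruct (Rlt_le_dec (PI/2) (t+v)) as [|l]; auto. exfalso.
  assert (0 <= cos (t+v)) by (apply cos_ge_0; lra). lra. }
assert (bnd : 1/2 < (t + v) / PI < 1).
{ split; [apply (Rmult_lt_reg_r PI)|apply (Rmult_lt_reg_r PI)]; try lra;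
  replace ((t + v) / PI * PI) with (t+v) by (field; lra); lra. }
split; [exact bnd|].
apply (root_unique ((t + v) / PI)); [exact bnd| |apply hat_spec; exact bnd].
split.
- split; [apply Rdiv_lt_0_compat; lra|].
  apply Rmult_lt_compat_r; [apply Rinv_0_lt_compat; lra| lra].
- replace (PI * ((t + v) / PI)) with (t+v) by (field; lra).
  replace (PI * ((t - v) / PI)) with (t-v) by (field; lra).
  rewrite id_G; try lra. fold X. rewrite cv2. rewrite Q. ring.
Qed.

Theorem proposition5p2 :
  (* (i) *)
  (forall h t1 t2 : R, 0 < h -> 0 < t1 < 1 -> t1 <= 1/2 ->
     0 < t2 < t1 -> Theta h t1 t2 \in unitmx)
  /\
  (* (ii) *)
  (exists hat : R -> R,
     (forall t1 : R, 1/2 < t1 < 1 -> 0 < hat t1 < 1/2) /\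
     (forall h t1 t2 : R, 0 < h -> 1/2 < t1 < 1 -> 0 < t2 < t1 ->
        (Theta h t1 t2 \notin unitmx <-> t2 = hat t1)) /\
     (forall x y : R,
        (1/2 < x < 1 /\ y = hat x) <->
        (exists t : R, PI/4 < t < 3 * PI / 4 /\
           x = (t + f_curve t) / PI /\ y = (t - f_curve t) / PI))).
Proof.
split.
- intros h t1 t2 hp [a1 a2] a3 [b1 b2].
  apply unit_Theta; auto. intro HD.
  apply (Dt_zero_iff t1 t2) in HD; try lra.
  pose proof PIpos as HPI.
  assert (0 <= cos (PI * t1)) by (apply cos_ge_0; nra).
  assert (0 < cos (PI * t2)) by (apply cos_gt_0; nra).
  pose proof (one_m_pos t1 ltac:(lra)). pose proof (one_m_pos t2 ltac:(lra)).
  unfold G in HD.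
  set (x := cos (PI * t1)) in *. set (y := cos (PI * t2)) in *.
  assert (0 <= x*y*(x-y)^2) by (apply Rmult_le_pos; nra).
  assert (0 < (1-x^2)*(1-y^2)) by nra. lra.
- exists hat. split; [|split].
  + intros t1 h. pose proof (hat_spec t1 h) as P. pose proof (root_small _ _ h P).
    destruct P as [[? ?] ?]. lra.
  + intros h t1 t2 hp ht1 ht2. split.
    * intro H. assert (Hn : ~ (Theta h t1 t2 \in unitmx)) by (apply/negP; exact H).
      rewrite unit_Theta in Hn; auto.
      assert (HD : Dt t1 t2 = 0) by (destruct (Req_dec (Dt t1 t2) 0); tauto).
      apply (Dt_zero_iff t1 t2) in HD; try lra.
      apply (root_unique t1); auto. split; auto. apply hat_spec; auto.
    * intro E. apply/negP. rewrite unit_Theta; auto. intro HD. apply HD.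
      apply Dt_zero_iff; try lra. subst t2. apply (hat_spec t1 ht1).
  + intros x y. split.
    * intros [hx ->]. apply curve_fwd; auto.
    * intros [t [ht [-> ->]]]. apply curve_bwd in ht. tauto.
Qed.
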